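(* Let $\mathcal M$ be a map in class $2_{\{0,1\}}$. Then no two distinct faces of $\mathcal M$ share two consecutive edges (i.e., there is no pair of distinct faces whose boundaries both contain a common path of two edges).
   Context: A map is a $2$-cell embedding of a connected simple graph (its underlying graph) in a closed surface; the components of the complement are the faces. All maps considered are polytopal: flags correspond bijectively to incident triples (vertex, edge, face). For a flag $\Phi$ and $i\in\{0,1,2\}$, $\Phi^i$ is the unique flag differing from $\Phi$ exactly in its vertex ($i=0$), edge ($i=1$) or face ($i=2$). $\mathrm{Aut}(\mathcal M)$ is the group of automorphisms of the underlying graph preserving the set of faces, acting on flags. A map is in class $2_{\{0,1\}}$ if $\mathrm{Aut}(\mathcal M)$ has exactly two orbits on flags and for every flag $\Phi$, the flags $\Phi^0,\Phi^1$ lie in the orbit of $\Phi$ while $\Phi^2$ does not. *)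

(* Defs.v *)
(* Maps are encoded combinatorially by their flags:
   a finite set of flags with the three involutions Phi |-> Phi^0, Phi^1, Phi^2. *)
From mathcomp Require Import all_boot all_fingroup.
Set Implicit Arguments. Unset Strict Implicit. Unset Printing Implicit Defensive.

Section Maps.
Variable Omega : finType.
Variables r0 r1 r2 : Omega -> Omega.

Definition same_vertex : rel Omega :=
  connect (fun x y => (y == r1 x) || (y == r2 x)).
Definition same_edge : rel Omega :=
  connect (fun x y => (y == r0 x) || (y == r2 x)).
Definition same_face : rel Omega :=
  connect (fun x y => (y == r0 x) || (y == r1 x)).
Definition flag_connected : Prop :=
  forall x y, connect (fun x y => [|| y == r0 x, y == r1 x | y == r2 x]) x y.

(* a map on a closed surface whose underlying graph is connected and simple *)
Definition is_map : Prop :=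
  (forall x, r0 (r0 x) = x /\ r1 (r1 x) = x /\ r2 (r2 x) = x) /\
  (forall x, r0 x <> x /\ r1 x <> x /\ r2 x <> x) /\
  (forall x, r0 (r2 x) = r2 (r0 x) /\ r0 (r2 x) <> x) /\
  flag_connected /\
  (* no loops *)
  (forall x, ~~ same_vertex x (r0 x)) /\
  (* no multiple edges *)
  (forall x y, same_vertex x y -> same_vertex (r0 x) (r0 y) ->
               same_edge x y).

(* flags correspond bijectively to incident (vertex, edge, face) triples *)
Definition polytopal : Prop :=
  (forall x y, same_vertex x y -> same_edge x y -> same_face x y -> x = y) /\
  (forall a b c, same_edge a b -> same_vertex a c -> same_face b c ->
     exists x, [/\ same_vertex x a, same_edge x a & same_face x b]).

Definition is_aut (g : {perm Omega}) : Prop :=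
  forall x, g (r0 x) = r0 (g x) /\ g (r1 x) = r1 (g x) /\ g (r2 x) = r2 (g x).

Definition same_orbit (x y : Omega) : Prop :=
  exists g : {perm Omega}, is_aut g /\ g x = y.

Definition class2_01 : Prop :=
  (exists a b, ~ same_orbit a b /\ forall x, same_orbit a x \/ same_orbit b x) /\
  (forall x, same_orbit x (r0 x) /\ same_orbit x (r1 x) /\ ~ same_orbit x (r2 x)).

(* two distinct faces (of x and y) whose boundaries both contain the
   two-edge path formed by the consecutive edges (of x and r1 x) at the
   common vertex *)
Definition share_two_consecutive_edges : Prop :=
  exists x y, [/\ ~~ same_face x y, same_vertex x y, ~~ same_edge x (r1 x),
                  same_edge x y & same_edge (r1 x) (r1 y)].

End Maps.

(* Main.v *)
Require Import Defs.
From mathcomp Require Import all_boot all_fingroup.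
Set Implicit Arguments. Unset Strict Implicit. Unset Printing Implicit Defensive.

Lemma conn_inv (T : finType) (e : rel T) (P : pred T) x y :
  P x -> (forall u v, P u -> e u v -> P v) -> connect e x y -> P y.
Proof.
move=> Px H /connectP [p pth ->]; elim: p x Px pth => //= z p IH x Px /andP [exz pth].
exact: IH (H _ _ Px exz) pth.
Qed.

Theorem corollary2p6 (Omega : finType) (r0 r1 r2 : Omega -> Omega) :
  is_map r0 r1 r2 -> polytopal r0 r1 r2 -> class2_01 r0 r1 r2 ->
  ~ share_two_consecutive_edges r0 r1 r2.
Proof.
move=> [Hinv [Hfix [Hcomm [_ [Hloop _]]]]] _ [[a [b [Hab Hall]]] Hcl]
  [x [y [Hxy Hvxy _ Hexy Her1]]].
have i0 t : r0 (r0 t) = t by case: (Hinv t).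
have i1 t : r1 (r1 t) = t by case: (Hinv t) => _ [].
have i2 t : r2 (r2 t) = t by case: (Hinv t) => _ [].
have c02 t : r0 (r2 t) = r2 (r0 t) by case: (Hcomm t).
have edgeS u w : same_edge r0 r2 u w ->
    [|| w == u, w == r0 u, w == r2 u | w == r0 (r2 u)].
  apply: (@conn_inv _ _ (fun w => [|| w == u, w == r0 u, w == r2 u | w == r0 (r2 u)]));
    first by rewrite /= eqxx.
  move=> s t /= Hs /orP [] /eqP ->; case/or4P: Hs => /eqP ->;
    rewrite ?c02 ?i0 ?i2 ?c02 ?eqxx ?orbT //.
have sv1 u : same_vertex r1 r2 u (r1 u) by apply: connect1; rewrite eqxx.
have sv2 u : same_vertex r1 r2 u (r2 u) by apply: connect1; rewrite eqxx orbT.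
have sv1' u : same_vertex r1 r2 (r1 u) u by rewrite -{2}(i1 u).
have sv2' u : same_vertex r1 r2 (r2 u) u by rewrite -{2}(i2 u).
have ey : y = r2 x.
  case/or4P: (edgeS _ _ Hexy) => /eqP ey //.
  - by rewrite ey /same_face connect0 in Hxy.
  - by move: (Hloop x); rewrite -ey Hvxy.
  - case/negP: (Hloop (r2 x)); rewrite -ey; exact: connect_trans (sv2' x) Hvxy.
have key : r1 (r2 x) = r2 (r1 x).
  rewrite ey in Her1.
  have v12 : same_vertex r1 r2 (r1 x) (r1 (r2 x)).
    exact: connect_trans (sv1' x) (connect_trans (sv2 x) (sv1 _)).
  case/or4P: (edgeS _ _ Her1) => /eqP e //.
  - have : r1 (r1 (r2 x)) = r1 (r1 x) by rewrite e.
    by rewrite !i1; case: (Hfix x) => _ [].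
  - by move: (Hloop (r1 x)); rewrite -e v12.
  - case/negP: (Hloop (r2 (r1 x))); rewrite -e; exact: connect_trans (sv2' _) v12.
have osym u v : same_orbit r0 r1 r2 u v -> same_orbit r0 r1 r2 v u.
  move=> [g [Hg <-]]; exists g^-1%g; split; last by rewrite permK.
  move=> z; have gi : forall w, g (g^-1%g w) = w by move=> w; rewrite permKV.
  have ginj := @perm_inj _ g.
  case: (Hg (g^-1%g z)) => [H0 [H1 H2]].
  by split; [|split]; apply: ginj; rewrite ?H0 ?H1 ?H2 !gi.
have otr u v w : same_orbit r0 r1 r2 u v -> same_orbit r0 r1 r2 v w ->
    same_orbit r0 r1 r2 u w.
  move=> [g [Hg <-]] [h [Hh <-]]; exists (g * h)%g; split; last by rewrite permM.
  move=> z; rewrite !permM; case: (Hg z) => [-> [-> ->]].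
  by case: (Hh (g z)) => [-> [-> ->]].
have Hx2 : forall z, same_orbit r0 r1 r2 x z \/ same_orbit r0 r1 r2 x (r2 z).
  move=> z; have [_ [_ Hz]] := Hcl z.
  case: (Hall x) => Hx; case: (Hall z) => Hz'; case: (Hall (r2 z)) => Hz2;
  first [ by left; apply: otr (osym _ _ Hx) Hz'
        | by right; apply: otr (osym _ _ Hx) Hz2
        | by exfalso; apply: Hz; apply: otr (osym _ _ Hz') Hz2 ].
have keyo z : same_orbit r0 r1 r2 x z -> r1 (r2 z) = r2 (r1 z).
  move=> [g [Hg <-]].
  case: (Hg x) => _ [Hg1 Hg2]; case: (Hg (r2 x)) => _ [Hg1' _];
  case: (Hg (r1 x)) => _ [_ Hg2'].
  by rewrite -Hg2 -Hg1' key Hg2' Hg1.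
have comm z : r1 (r2 z) = r2 (r1 z).
  case: (Hx2 z) => [/keyo //|/keyo].
  rewrite i2 => e; by rewrite e i2.
have r2inj : injective r2 by apply: (can_inj i2).
apply: (proj2 (proj2 (Hcl x))); exists (perm r2inj); split; last by rewrite permE.
move=> z; rewrite !permE; split; [|split] => //.
Qed.
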